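(* Let $K$ be a set of $m$ knapsacks with capacities $S_i$, $i\in K$, and let $J_S'$ be a set of items each of which is small with respect to every knapsack of $K$, i.e., $s_j<\varepsilon S_i$ for all $j\in J_S'$ and $i\in K$. Let $J_B'$ be a set of items together with a feasible integral packing of $J_B'$ into the knapsacks of $K$ such that the total remaining free capacity in these $m$ knapsacks is at least $s(J_S')=\sum_{j\in J_S'}s_j$. Then the following procedure feasibly packs all items of $J_B'\cup J_S'$ into the $m$ knapsacks of $K$ plus $\varepsilon m$ additional knapsacks, each of which has capacity $\min_{i\in K}S_i$: keep the packing of $J_B'$; consider the items of $J_S'$ in an arbitrary order and the knapsacks of $K$ in an arbitrary order, with the first knapsack opened; if the current small item fits into the remaining capacity of the currently open knapsack, place it there; otherwise place it into the next free slot of the additional knapsacks, close the current knapsack and open the next one.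
   Context: Throughout, $\varepsilon>0$ with $\frac1\varepsilon\in\mathbb{N}$ and $\varepsilon m\in\mathbb{N}$. A packing is feasible if every item is placed in at most one knapsack and the total size of items in each knapsack does not exceed its capacity. *)

(* Defs.v *)
From HB Require Import structures.
From mathcomp Require Import all_boot all_order all_algebra.
Set Implicit Arguments. Unset Strict Implicit. Unset Printing Implicit Defensive.
Import Order.TTheory GRing.Theory Num.Theory.
Local Open Scope ring_scope.

(* Destinations of an item: inl i = knapsack i of K (i : 'I_m);
   inr t = the t-th additional knapsack (0-based). *)
Definition dest (m : nat) := ('I_m + nat)%type.

Section Knapsack.
Variables (R : realFieldType) (I : finType) (m : nat).

Definition bload (JB : {set I}) (s : I -> R) (pB : I -> option 'I_m) (i : 'I_m) : R :=
  \sum_(j in JB | pB j == Some i) s j.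

(* The greedy procedure.
   free i : remaining capacity of knapsack i after packing the big items;
   k      : number of slots per additional knapsack (k = 1/eps); the c-th
            (0-based) overflowing item goes to the next free slot, i.e. to
            additional knapsack c %/ k;
   ks     : remaining knapsacks of K in the chosen order, the head being the
            currently open one;
   r      : remaining capacity of the currently open knapsack;
   c      : number of slots of the additional knapsacks already used;
   js     : remaining small items, in the chosen order.
   The output lists the destination of each item of js, in order.
   (The branch ks = [::], where no knapsack of K is open anymore, is an
   arbitrary completion: items are put in further slots.) *)
Fixpoint greedy (free : 'I_m -> R) (k : nat) (s : I -> R)
    (ks : seq 'I_m) (r : R) (c : nat) (js : seq I) : seq (dest m) :=
  match js with
  | [::] => [::]
  | j :: js' =>
    match ks with
    | [::] => inr (c %/ k)%N :: greedy free k s ks r c.+1 js'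
    | i :: ks' =>
      if s j <= r then inl i :: greedy free k s ks (r - s j) c js'
      else
        let r' := match ks' with i' :: _ => free i' | [::] => 0 end in
        inr (c %/ k)%N :: greedy free k s ks' r' c.+1 js'
    end
  end.

Definition greedy_run (free : 'I_m -> R) (k : nat) (s : I -> R)
    (ks : seq 'I_m) (js : seq I) : seq (dest m) :=
  greedy free k s ks (match ks with i :: _ => free i | [::] => 0 end) 0 js.

Definition final_packing (S : 'I_m -> R) (s : I -> R) (JB JS : {set I})
    (pB : I -> option 'I_m) (k : nat) (ks : seq 'I_m) (js : seq I)
    (j : I) : option (dest m) :=
  if j \in JB then omap inl (pB j)
  else if j \in JS then
    Some (nth (inr 0%N) (greedy_run (fun i => S i - bload JB s pB i) k s ks js)
              (index j js))
  else None.

(* Feasible packing of the items of A into the m knapsacks of K (capacities S)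
   plus e additional knapsacks of capacity min_i S i (i.e. <= S i for all i):
   every item of A is placed (in exactly one knapsack, as f is a function),
   only items of A are placed, and no capacity is exceeded. *)
Definition feasible_ext (S : 'I_m -> R) (s : I -> R) (e : nat) (A : {set I})
    (f : I -> option (dest m)) : Prop :=
  [/\ forall j, j \in A -> f j != None,
      forall j, j \notin A -> f j = None,
      forall i : 'I_m, \sum_(j | f j == Some (inl i)) s j <= S i,
      forall t : nat, (exists j, f j = Some (inr t)) -> (t < e)%N
    & forall (t : nat) (i : 'I_m), \sum_(j | f j == Some (inr t)) s j <= S i].

End Knapsack.

(* Main.v *)
Require Import Defs.
From HB Require Import structures.
From mathcomp Require Import all_boot all_order all_algebra.
From mathcomp Require Import zify lra.
Import Order.TTheory GRing.Theory Num.Theory.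
Local Open Scope ring_scope.
Set Implicit Arguments. Unset Strict Implicit.

Section G.
Variables (R : realFieldType) (I : finType) (m : nat).
Variables (free : 'I_m -> R) (k : nat) (s : I -> R).

Lemma eq_inl (a b : 'I_m) : (inl a == inl b :> dest m) = (a == b).
Proof. by apply/eqP/eqP => [[]|->]. Qed.
Lemma eq_inr_inl (a : 'I_m) b : (inr b == inl a :> dest m) = false.
Proof. by apply/eqP. Qed.
Lemma eq_Some (T : eqType) (a b : T) : (Some a == Some b) = (a == b).
Proof. by apply/eqP/eqP => [[]|->]. Qed.

Lemma size_greedy ks r c js : size (greedy free k s ks r c js) = size js.
Proof.
elim: js ks r c => [|j js IH] [|i ks] r c //=; first by rewrite IH.
by case: ifP => _ /=; rewrite IH.
Qed.

Definition getr (d : dest m) : option nat := if d is inr t then Some t else None.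

Lemma greedy_slots ks r c js : exists n,
  pmap getr (greedy free k s ks r c js) = map (divn^~ k) (iota c n).
Proof.
elim: js ks r c => [|j js IH] [|i ks] r c /=; try by exists 0%N.
  by have [n ->] := IH [::] r c.+1; exists n.+1.
case: ifP => _ /=; first by apply: IH.
by have [n ->] := IH ks (match ks with i' :: _ => free i' | [::] => 0 end) c.+1; exists n.+1.
Qed.

Definition Bd (ks : seq 'I_m) (r : R) := if ks is _ :: ks' then r + \sum_(i <- ks') free i else 0.

Lemma greedy_over ks r c js : (forall j, 0 < s j) ->
  \sum_(j <- js) s j <= Bd ks r ->
  (size (pmap getr (greedy free k s ks r c js)) <= (size ks).-1)%N.
Proof.
move=> Hs.
have sge0 : forall l, 0 <= \sum_(j <- l) s j.
  by move=> l; apply: sumr_ge0 => j _; apply: ltW.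
elim: js ks r c => [|j js IH] [|i ks] r c //=; rewrite big_cons.
  by move=> H; have := Hs j; have := sge0 js; lra.
case: ifP => H /= Hb.
  apply: IH => /=; have := sge0 js; lra.
have Hl : r < s j by rewrite ltNge H.
have HB : \sum_(j <- js) s j < \sum_(i <- ks) free i by lra.
case: ks IH Hb HB => [|i' ks] IH Hb HB.
  by have := sge0 js; rewrite big_nil in HB; lra.
rewrite big_cons in HB; have := IH (i' :: ks) (free i') c.+1 (ltW HB).
by [].
Qed.

Definition cap (ks : seq 'I_m) (r : R) (i : 'I_m) :=
  if ks is i0 :: ks' then (if i == i0 then r else if i \in ks' then free i else 0) else 0.

Lemma greedy_load ks r c js i : uniq ks -> 0 <= r -> (forall i, 0 <= free i) ->
  \sum_(p <- zip js (greedy free k s ks r c js) | p.2 == inl i) s p.1 <= cap ks r i.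
Proof.
move=> + + Hf.
elim: js ks r c => [|j js IH] [|i0 ks] r c Hu Hr /=; rewrite ?big_nil.
- by [].
- by case: ifP => // _; case: ifP.
- by rewrite big_cons /=; move: (IH [::] r c.+1 Hu Hr); rewrite /=. 
case: ifP => H.
  rewrite big_cons eq_inl.
  have := IH (i0 :: ks) (r - s j) c Hu; rewrite subr_ge0 => /(_ H) /=.
  case: (eqVneq i i0) => [->|ne]; rewrite ?eqxx ?(negbTE ne) /=; first by lra.
  by rewrite ?eq_sym ?(negbTE ne) /=.
rewrite big_cons eq_inr_inl.
move: Hu => /= /andP[ni0 Hu].
have := IH ks (match ks with i' :: _ => free i' | [::] => 0 end) c.+1 Hu.
case: ks ni0 Hu IH => [|i' ks] ni0 Hu IH /=.
  move=> /(_ (lexx 0)) h; apply: (le_trans h); by case: ifP.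
move=> /(_ (Hf i')).
rewrite in_cons negb_or in ni0; case/andP: ni0 => ne1 ni0.
case: (eqVneq i i0) => [->|ne].
  by rewrite (negbTE ne1) (negbTE ni0) => h; apply: (le_trans h).
case: (eqVneq i i') => [->|ne'] h; apply: (le_trans h).
  by rewrite in_cons eqxx.
by rewrite in_cons (negbTE ne').
Qed.

End G.

Lemma zip_index (T : eqType) (U : Type) (x0 : U) (js : seq T) (o : seq U) :
  uniq js -> size o = size js ->
  zip js o = map (fun j => (j, nth x0 o (index j js))) js.
Proof.
elim: js o => [|j js IH] [|x o] //= /andP[Hj Hu] [Ho].
rewrite eqxx; congr cons; rewrite (IH o Hu Ho).
apply/eq_in_map => j' Hj' /=.
have ne : (j == j') = false by apply/eqP => E; move: Hj; rewrite E Hj'.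
by rewrite ne.
Qed.

Lemma sum_le_count (R : numDomainType) (T : eqType) (l : seq T) (P : pred T) (F : T -> R) a :
  (forall x, x \in l -> F x <= a) ->
  \sum_(x <- l | P x) F x <= (count P l)%:R * a.
Proof.
elim: l => [|x l IH] H; rewrite ?big_nil ?mul0r //= big_cons.
have IH' : \sum_(x <- l | P x) F x <= (count P l)%:R * a.
  by apply: IH => y Hy; apply: H; rewrite in_cons Hy orbT.
case: (P x) => /=; last by rewrite add0n.
by rewrite natrD mulrDl mul1r lerD // H // in_cons eqxx.
Qed.

Lemma count_iota_div k c n t : (0 < k)%N ->
  (count (pred1 t) (map (divn^~ k) (iota c n)) <= k)%N.
Proof.
move=> kp; rewrite count_map -size_filter.
rewrite -{2}(size_iota (t * k) k).
apply: uniq_leq_size; first by apply: filter_uniq; apply: iota_uniq.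
move=> x; rewrite mem_filter mem_iota => /andP[/eqP /= Ex _].
move: Ex => <-. rewrite mulnC. have := divn_eq x k. have := ltn_pmod x kp. set q := (x %/ k)%N. set r := (x %% k)%N. move=> h1 h2. rewrite mem_iota h2 (mulnC q). apply/andP; split; [exact: leq_addr | by rewrite ltn_add2l].
Qed.


Lemma eq_inl_inr m (a : 'I_m) b : (inl a == inr b :> dest m) = false.
Proof. by apply/eqP. Qed.
Lemma eq_inr m (a b : nat) : (inr a == inr b :> dest m) = (a == b).
Proof. by apply/eqP/eqP => [[]|->]. Qed.
Lemma eq_NoneSome (T : eqType) (a : T) : (None == Some a) = false.
Proof. by apply/eqP. Qed.
Lemma count_getr m (o : seq (dest m)) t :
  count (fun d => d == inr t) o = count (pred1 t) (pmap (@getr m) o).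
Proof.
elim: o => [|[a|b] o IH] //=.
by rewrite IH eq_inr.
Qed.

Lemma mem_zip1 (T U : eqType) (s : seq T) (t : seq U) p : p \in zip s t -> p.1 \in s.
Proof.
elim: s t => [|x s IH] [|y t] //.
change (zip (x :: s) (y :: t)) with ((x, y) :: zip s t); rewrite in_cons => /orP [/eqP -> | h].
  by rewrite eqxx.
by rewrite (IH t h) orbT.
Qed.

Unset Implicit Arguments. Set Strict Implicit.

Theorem lemmaC5 (R : realFieldType) (I : finType) (m k e : nat) (eps : R)
    (S : 'I_m -> R) (s : I -> R) (JB JS : {set I}) (pB : I -> option 'I_m)
    (ks : seq 'I_m) (js : seq I) :
  (0 < m)%N ->
  0 < eps -> eps^-1 = k%:R -> eps * m%:R = e%:R ->
  (forall j, 0 < s j) ->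
  [disjoint JB & JS] ->
  (forall j (i : 'I_m), j \in JS -> s j < eps * S i) ->
  (forall j, j \in JB -> pB j != None) ->
  (forall i, bload JB s pB i <= S i) ->
  \sum_(j in JS) s j <= \sum_(i < m) (S i - bload JB s pB i) ->
  perm_eq ks (enum 'I_m) ->
  perm_eq js (enum JS) ->
  feasible_ext S s e (JB :|: JS) (final_packing S s JB JS pB k ks js).
Proof.
move=> m0 eps0 Hk He Hs Hdis Hsmall HpB Hbl Hsum Hks Hjs.
rewrite /feasible_ext /final_packing.
set free := fun i => S i - bload JB s pB i.
set out := greedy_run free k s ks js.
have Hfree : forall i, 0 <= free i by move=> i; rewrite /free subr_ge0.
have bl0 : forall i, 0 <= bload JB s pB i.
  by move=> i; apply: sumr_ge0 => j _; apply: ltW.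
have kpos : (0 < k)%N.
  rewrite lt0n; apply/negP => /eqP k0; move: Hk; rewrite k0 => /eqP.
  by rewrite invr_eq0 (gt_eqF eps0).
have epsk : eps * k%:R = 1 by rewrite -Hk mulfV // gt_eqF.
have ek : (e * k)%N = m.
  apply/eqP; rewrite -(eqr_nat R) natrM -He mulrAC epsk mul1r.
  done.
have uks : uniq ks by rewrite (perm_uniq Hks) enum_uniq.
have ujs : uniq js by rewrite (perm_uniq Hjs) enum_uniq.
have memjs : forall j, (j \in js) = (j \in JS) by move=> j; rewrite (perm_mem Hjs) mem_enum.
have memks : forall i, i \in ks by move=> i; rewrite (perm_mem Hks) mem_enum.
have Hsz : size out = size js by apply: size_greedy.
have Hzip : forall d, \sum_(j in JS | nth (inr 0%N) out (index j js) == d) s j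
    = \sum_(p <- zip js out | p.2 == d) s p.1.
  move=> d; rewrite (zip_index (inr 0%N) ujs Hsz) big_map -big_enum_cond.
  by rewrite (perm_big _ Hjs).
set r0 := match ks with i :: _ => free i | [::] => 0 end.
have Hr0 : 0 <= r0 by rewrite /r0; case: (ks).
have [n Hn] := greedy_slots free k s ks r0 0 js.
have Hnb : (n <= m.-1)%N.
  have := @greedy_over R I m free k s ks r0 0 js Hs.
  rewrite -/(greedy_run free k s ks js) -/out Hn size_map size_iota.
  rewrite (perm_size Hks) size_enum_ord; apply.
  have -> : Bd free ks r0 = \sum_(i <- ks) free i.
    by rewrite /r0; case: (ks) => [|i ks'] /=; rewrite ?big_nil ?big_cons.
  rewrite (perm_big _ Hks) big_enum /=.
  by rewrite (perm_big _ Hjs) big_enum; exact: Hsum.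
have Hout : out = greedy free k s ks r0 0 js by [].
split.
- move=> j; rewrite in_setU; case: ifP => [hB _|hB /= hS]; first by case: (pB j) (HpB j hB).
  by rewrite hS.
- by move=> j; rewrite in_setU negb_or => /andP[h1 h2]; rewrite (negbTE h1) (negbTE h2).
- move=> i.
  have E : \sum_(j | (if j \in JB then omap inl (pB j) else if j \in JS then
        Some (nth (inr 0%N) out (index j js)) else None) == Some (inl i)) s j
      = bload JB s pB i + \sum_(j in JS | nth (inr 0%N) out (index j js) == inl i) s j.
    rewrite /bload big_mkcond [X in _ = X + _]big_mkcond [X in _ = _ + X]big_mkcond -big_split /=.
    apply: eq_bigr => j _.
    case hB: (j \in JB).
      rewrite (disjointFr Hdis hB) /= addr0.
      by case: (pB j) => [a|] /=; rewrite ?eq_Some ?eq_inl ?eq_NoneSome.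
    by rewrite add0r; case hS: (j \in JS) => /=; rewrite ?eq_Some ?eq_NoneSome.
  rewrite E Hzip.
  have := @greedy_load R I m free k s ks r0 0 js i uks Hr0 Hfree.
  rewrite -Hout.
  have -> : cap free ks r0 i = free i.
    rewrite /r0; case: (ks) (memks i) => [|i0 ks'] //=.
    rewrite in_cons; case: (eqVneq i i0) => [->|ne] //= h.
    by rewrite h.
  rewrite /free => h; lra.
- move=> t [j]; case: ifP => hB; first by case: (pB j).
  case: ifP => hS // [Ej].
  have h1 : inr t \in out by rewrite -Ej; apply: mem_nth; rewrite Hsz index_mem memjs.
  have h2 : t \in pmap (@getr m) out by rewrite mem_pmap; exact: (map_f (@getr m) h1).
  move: h2; rewrite Hout Hn => /mapP [c' hc ->]; move: hc; rewrite mem_iota add0n => hc.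
  rewrite ltn_divLR // ek; move: Hnb; lia.
- move=> t i.
  have E : \sum_(j | (if j \in JB then omap inl (pB j) else if j \in JS then
        Some (nth (inr 0%N) out (index j js)) else None) == Some (inr t)) s j
      = \sum_(j in JS | nth (inr 0%N) out (index j js) == inr t) s j.
    rewrite big_mkcond [RHS]big_mkcond; apply: eq_bigr => j _.
    case hB: (j \in JB).
      by rewrite (disjointFr Hdis hB) /=; case: (pB j) => [a|] /=; rewrite ?eq_Some ?eq_inl_inr ?eq_NoneSome.
    by case hS: (j \in JS) => /=; rewrite ?eq_Some ?eq_NoneSome.
  rewrite E Hzip.
  have Si0 : 0 <= eps * S i by apply: mulr_ge0; [exact: ltW | exact: le_trans (bl0 i) (Hbl i)].
  apply: le_trans (@sum_le_count R _ (zip js out) (fun p => p.2 == inr t) (fun p => s p.1) (eps * S i) _) _.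
    move=> p hp; have := mem_zip1 hp; rewrite memjs => h.
    exact: ltW (Hsmall _ i h).
  have cnt : count (fun p : I * dest m => p.2 == inr t) (zip js out) = count (fun d => d == inr t) out.
    by rewrite -{2}(@unzip2_zip _ _ js out) ?Hsz // count_map.
  rewrite cnt count_getr Hout Hn.
  have ck := count_iota_div 0 n t kpos.
  have ck' : (count_mem t [seq (x %/ k)%N | x <- iota 0 n])%:R <= k%:R :> R by rewrite ler_nat.
  apply: le_trans (ler_wpM2r Si0 ck') _.
  by rewrite mulrA [k%:R * eps]mulrC epsk mul1r.
Qed.
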